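(* Let $\phi\in\Phi$, let $f:\mathbb{R}^n\to(-\infty,+\infty]$ be proper lsc, $\Omega\subseteq\mathbb{R}^n$ closed, $\delta\ge0$, $p\in[1,\infty]$, and $\mathcal{J}=\{J_1,\dots,J_m\}$ a partition of $\{1,\dots,n\}$. Suppose the problem $\min_x\{\|G_{\mathcal{J},p}(x)\|_0: f(x)\le\delta,\ x\in\Omega\}$ has a nonempty global optimal solution set and nonzero optimal value $s^*$, and let $\mathcal{S}=\{x\in\Omega: f(x)\le\delta\}$. Suppose there exists $\alpha>0$ such that $\pi_{s^*}(G_{\mathcal{J},p}(x))\ge\alpha$ for all $x\in\mathcal{S}$. Let $\bar\varrho=\phi'_-(1)/\alpha$. Then: (i) for all $x\in\mathcal{S}$ and $w\in[0,e]$, $\sum_{i=1}^m\phi(w_i)+\bar\varrho\langle e-w,G_{\mathcal{J},p}(x)\rangle\ge s^*$, where $s^*$ is also the optimal value of the MPEC $$\textstyle (Q)\ \min_{x,w}\{\sum_{i=1}^m\phi(w_i):\ \langle e-w,G_{\mathcal{J},p}(x)\rangle=0,\ 0\le w\le e,\ x\in\Omega,\ f(x)\le\delta\};$$ (ii) for every $\varrho>\bar\varrho$, the set of global optimal solutions of $$\textstyle \min_{x\in\mathbb{R}^n,w\in\mathbb{R}^m}\{\sum_{i=1}^m\phi(w_i)+\varrho\langle e-w,G_{\mathcal{J},p}(x)\rangle:\ f(x)\le\delta,\ x\in\Omega,\ 0\le w\le e\}$$ coincides with the set of global optimal solutions of $(Q)$.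
   Context: $\Phi$ is the family of proper lsc functions $\phi:\mathbb{R}\to(-\infty,+\infty]$ with $\mathrm{int}(\mathrm{dom}\,\phi)\supseteq[0,1]$, convex on $[0,1]$, such that $\min_{t\in[0,1]}\phi(t)=0$ is attained at a (fixed) point $t^*\in[0,1)$, and $\phi(1)=1$; $\phi'_-(1)$ is the left derivative of $\phi$ at $1$. $G_{\mathcal{J},p}(x):=(\|x_{J_1}\|_p,\dots,\|x_{J_m}\|_p)^T$; $\|v\|_0$ counts nonzero entries; $e$ is the all-ones vector; for a vector $v$, $\pi(v)$ is the vector of the entries of $|v|$ arranged in nonincreasing order and $\pi_i(v)$ its $i$-th entry. *)

(* Defs.v *)
From Stdlib Require Import Reals Lra List Arith.
Import ListNotations.
Open Scope R_scope.

Inductive ereal : Type := Fin (r : R) | PInf.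

Definition ele (a : ereal) (d : R) : Prop :=
  match a with Fin r => r <= d | PInf => False end.
Definition elt (t : R) (a : ereal) : Prop :=
  match a with Fin r => t < r | PInf => True end.
Definition efin (a : ereal) : Prop :=
  match a with Fin _ => True | PInf => False end.
(** real value of a finite extended real (only used where finiteness holds) *)
Definition eval (a : ereal) : R :=
  match a with Fin r => r | PInf => 0 end.

(** Vectors of R^n are represented as nat -> R vanishing from index n on. *)
Definition vec (n : nat) (x : nat -> R) : Prop := forall i, (n <= i)%nat -> x i = 0.
Definition near (n : nat) (x y : nat -> R) (eps : R) : Prop :=
  forall i, (i < n)%nat -> Rabs (y i - x i) < eps.

Definition proper_vec (n : nat) (f : (nat -> R) -> ereal) : Prop :=
  exists x, vec n x /\ efin (f x).
Definition lsc_vec (n : nat) (f : (nat -> R) -> ereal) : Prop :=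
  forall x, vec n x -> forall t, elt t (f x) ->
    exists eps, 0 < eps /\ forall y, vec n y -> near n x y eps -> elt t (f y).
Definition closed_vec (n : nat) (Om : (nat -> R) -> Prop) : Prop :=
  forall x, vec n x ->
    (forall eps, 0 < eps -> exists y, vec n y /\ Om y /\ near n x y eps) -> Om x.

Definition proper_R (phi : R -> ereal) : Prop := exists t, efin (phi t).
Definition lsc_R (phi : R -> ereal) : Prop :=
  forall x t, elt t (phi x) ->
    exists eps, 0 < eps /\ forall y, Rabs (y - x) < eps -> elt t (phi y).
Definition in_Phi (phi : R -> ereal) : Prop :=
  proper_R phi /\ lsc_R phi /\
  (* int(dom phi) contains [0,1] *)
  (forall t, 0 <= t <= 1 -> exists eps, 0 < eps /\
       forall u, Rabs (u - t) < eps -> efin (phi u)) /\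
  (forall s t l, 0 <= s <= 1 -> 0 <= t <= 1 -> 0 <= l <= 1 ->
       eval (phi (l * s + (1 - l) * t)) <= l * eval (phi s) + (1 - l) * eval (phi t)) /\
  (exists tstar, 0 <= tstar < 1 /\ phi tstar = Fin 0 /\
       forall t, 0 <= t <= 1 -> 0 <= eval (phi t)) /\
  phi 1 = Fin 1.

Definition left_deriv1 (phi : R -> ereal) (d : R) : Prop :=
  forall eps, 0 < eps -> exists del, 0 < del /\
    forall t, 1 - del < t < 1 ->
      Rabs ((eval (phi 1) - eval (phi t)) / (1 - t) - d) < eps.

Inductive pexp : Type := PFin (q : R) | PInfty.
Definition valid_p (p : pexp) : Prop :=
  match p with PFin q => 1 <= q | PInfty => True end.

(** partition {J_1,..,J_m} of {0,..,n-1}: blk i = index of the block containing i *)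
Definition blk_partition (n m : nat) (blk : nat -> nat) : Prop :=
  (forall i, (i < n)%nat -> (blk i < m)%nat) /\
  (forall j, (j < m)%nat -> exists i, (i < n)%nat /\ blk i = j).

Fixpoint sumR (k : nat) (g : nat -> R) : R :=
  match k with O => 0 | S k' => sumR k' g + g k' end.
Fixpoint maxR (k : nat) (g : nat -> R) : R :=
  match k with O => 0 | S k' => Rmax (maxR k' g) (g k') end.

Definition rpow (a b : R) : R :=
  if Req_EM_T a 0 then 0 else Rpower a b.

Definition block_norm (n : nat) (blk : nat -> nat) (p : pexp) (x : nat -> R) (j : nat) : R :=
  match p with
  | PFin q => rpow (sumR n (fun i => if Nat.eqb (blk i) j then rpow (Rabs (x i)) q else 0)) (1 / q)
  | PInfty => maxR n (fun i => if Nat.eqb (blk i) j then Rabs (x i) else 0)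
  end.

Definition G (n : nat) (blk : nat -> nat) (p : pexp) (x : nat -> R) : nat -> R :=
  fun j => block_norm n blk p x j.

Fixpoint l0 (m : nat) (v : nat -> R) : nat :=
  match m with
  | O => O
  | S k => (l0 k v + (if Req_EM_T (v k) 0 then 0 else 1))%nat
  end.

(** pi(v): entries of |v| in nonincreasing order; pi_i(v) its i-th entry (1-based) *)
Fixpoint insert_desc (a : R) (l : list R) : list R :=
  match l with
  | [] => [a]
  | b :: l' => if Rle_dec b a then a :: l else b :: insert_desc a l'
  end.
Fixpoint sort_desc (l : list R) : list R :=
  match l with [] => [] | a :: l' => insert_desc a (sort_desc l') end.
Definition pi_vec (m : nat) (v : nat -> R) : list R :=
  sort_desc (map (fun j => Rabs (v j)) (seq 0 m)).
Definition pi_i (m : nat) (v : nat -> R) (i : nat) : R :=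
  nth (i - 1) (pi_vec m v) 0.

Definition inner (m : nat) (u v : nat -> R) : R := sumR m (fun j => u j * v j).
Definition e_minus (w : nat -> R) : nat -> R := fun j => 1 - w j.

Definition Phisum (m : nat) (phi : R -> ereal) (w : nat -> R) : R :=
  sumR m (fun i => eval (phi (w i))).

Definition box (m : nat) (w : nat -> R) : Prop :=
  vec m w /\ forall j, (j < m)%nat -> 0 <= w j <= 1.

Definition is_gmin (feas : (nat -> R) -> (nat -> R) -> Prop)
  (obj : (nat -> R) -> (nat -> R) -> R) (x w : nat -> R) : Prop :=
  feas x w /\ forall x' w', feas x' w' -> obj x w <= obj x' w'.
Definition opt_val (feas : (nat -> R) -> (nat -> R) -> Prop)
  (obj : (nat -> R) -> (nat -> R) -> R) (v : R) : Prop :=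
  (forall x w, feas x w -> v <= obj x w) /\
  (forall eps, 0 < eps -> exists x w, feas x w /\ obj x w < v + eps).

(* Main.v *)
Require Import Defs.
From Stdlib Require Import Reals Lra List Arith.
From Stdlib Require Import Lia.
Import ListNotations.
Open Scope R_scope.

Lemma sumR_ext k f g : (forall i, (i < k)%nat -> f i = g i) -> sumR k f = sumR k g.
Proof. induction k; simpl; intros H; auto. rewrite IHk by auto. rewrite H; auto. Qed.
Lemma sumR_le k f g : (forall i, (i < k)%nat -> f i <= g i) -> sumR k f <= sumR k g.
Proof. induction k; simpl; intros H; [lra|]. pose proof (IHk (fun i Hi => H i ltac:(lia))). pose proof (H k ltac:(lia)). lra. Qed.
Lemma sumR_zero k : sumR k (fun _ => 0) = 0.
Proof. induction k; simpl; lra. Qed.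

Lemma rpow_nonneg a b : 0 <= rpow a b.
Proof. unfold rpow. destruct Req_EM_T; [lra|]. unfold Rpower. left; apply exp_pos. Qed.
Lemma maxR_nonneg k g : 0 <= maxR k g.
Proof. induction k; simpl; [lra|]. eapply Rle_trans; [exact IHk| apply Rmax_l]. Qed.
Lemma G_nonneg n blk p x j : 0 <= G n blk p x j.
Proof. unfold G, block_norm. destruct p; [apply rpow_nonneg|apply maxR_nonneg]. Qed.

Section PhiFacts.
Variable phi : R -> ereal.
Variable d : R.
Hypothesis Hconv : forall s t l, 0 <= s <= 1 -> 0 <= t <= 1 -> 0 <= l <= 1 ->
       eval (phi (l * s + (1 - l) * t)) <= l * eval (phi s) + (1 - l) * eval (phi t).
Hypothesis H1 : phi 1 = Fin 1.
Hypothesis Hd : left_deriv1 phi d.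

Lemma slope_mono w t : 0 <= w -> w < t -> t < 1 ->
  (1 - eval (phi w)) / (1 - w) <= (1 - eval (phi t)) / (1 - t).
Proof.
  intros Hw Hwt Ht.
  set (l := (1 - t) / (1 - w)).
  assert (Hl : 0 <= l <= 1).
  { unfold l; split. apply Rmult_le_pos; [lra| left; apply Rinv_0_lt_compat; lra].
    apply (Rmult_le_reg_r (1 - w)); [lra|]. field_simplify; lra. }
  pose proof (Hconv w 1 l ltac:(lra) ltac:(lra) Hl) as Hc.
  replace (l * w + (1 - l) * 1) with t in Hc by (unfold l; field; lra).
  rewrite H1 in Hc; simpl in Hc.
  set (a := eval (phi w)) in *. set (b := eval (phi t)) in *.
  assert (Hp : (1 - w) * b <= (1 - t) * a + (t - w)).
  { assert (Hl2 : l * (1 - w) = 1 - t) by (unfold l; field; lra).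
    assert ((1 - w) * b <= (1 - w) * (l * a + (1 - l) * 1)) by (apply Rmult_le_compat_l; lra).
    nra. }
  apply (Rmult_le_reg_r ((1 - w) * (1 - t))). apply Rmult_lt_0_compat; lra.
  replace ((1 - a) / (1 - w) * ((1 - w) * (1 - t))) with ((1 - a) * (1 - t)) by (field; lra).
  replace ((1 - b) / (1 - t) * ((1 - w) * (1 - t))) with ((1 - b) * (1 - w)) by (field; lra).
  nra.
Qed.

Lemma phi_lower w : 0 <= w <= 1 -> 1 - d * (1 - w) <= eval (phi w).
Proof.
  intros Hw. destruct (Req_dec w 1) as [->|Hne]. rewrite H1; simpl; lra.
  destruct (Rle_lt_dec (1 - d * (1 - w)) (eval (phi w))) as [ok|bad]; [exact ok|exfalso].
  set (sw := (1 - eval (phi w)) / (1 - w)).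
  assert (Hsw : d < sw).
  { unfold sw. apply (Rmult_lt_reg_r (1 - w)); [lra|].
    replace ((1 - eval (phi w)) / (1 - w) * (1 - w)) with (1 - eval (phi w)) by (field; lra). lra. }
  destruct (Hd (sw - d) ltac:(lra)) as [del [Hdel Ht]].
  set (t := Rmax ((1 + w) / 2) (1 - del / 2)).
  assert (Htw : w < t) by (unfold t; eapply Rlt_le_trans; [|apply Rmax_l]; lra).
  assert (Ht1 : t < 1) by (unfold t; apply Rmax_lub_lt; lra).
  assert (Htd : 1 - del < t) by (unfold t; eapply Rlt_le_trans; [|apply Rmax_r]; lra).
  specialize (Ht t ltac:(lra)). rewrite H1 in Ht; simpl in Ht.
  pose proof (slope_mono w t ltac:(lra) Htw Ht1). fold sw in H.
  apply Rabs_def2 in Ht. lra.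
Qed.
End PhiFacts.

Definition ind (a x : R) : R := if Rle_dec a x then 1 else 0.
Definition cntR (a : R) (l : list R) : R := fold_right (fun x acc => ind a x + acc) 0 l.

Lemma ind_nonneg a x : 0 <= ind a x.
Proof. unfold ind; destruct Rle_dec; lra. Qed.
Lemma cntR_nonneg a l : 0 <= cntR a l.
Proof. induction l; simpl; [lra|]. pose proof (ind_nonneg a a0); lra. Qed.

Lemma cntR_insert al a l : cntR al (insert_desc a l) = cntR al (a :: l).
Proof. induction l as [|b l IH]; simpl; auto. destruct Rle_dec; simpl; auto.
  simpl in IH. rewrite IH. ring. Qed.
Lemma cntR_sort al l : cntR al (sort_desc l) = cntR al l.
Proof. induction l; simpl; auto. rewrite cntR_insert. simpl. rewrite IHl; auto. Qed.

Fixpoint desc (l : list R) : Prop :=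
  match l with [] => True | a :: t => (match t with [] => True | b :: _ => b <= a end) /\ desc t end.

Lemma desc_insert a l : desc l -> desc (insert_desc a l).
Proof.
  induction l as [|b l IH]; simpl; intros H.
  - split; auto.
  - destruct (Rle_dec b a) as [Hba|Hba]; simpl.
    + split; auto.
    + destruct H as [Hh Hl]. split; [|auto].
      destruct l as [|c l']; simpl; [lra|].
      destruct (Rle_dec c a); simpl; lra.
Qed.
Lemma desc_sort l : desc (sort_desc l).
Proof. induction l; simpl; auto. apply desc_insert; auto. Qed.

Lemma count_desc al t : forall a k, 0 < al -> desc (a :: t) -> al <= nth k (a :: t) 0 ->
  al <= a /\ INR (S k) <= cntR al (a :: t).
Proof.
  induction t as [|b t IH]; intros a k Hal Hd Hn.
  - destruct k as [|k]; simpl in Hn.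
    + simpl. unfold ind. destruct Rle_dec; [|lra]. split; lra.
    + destruct k; simpl in Hn; lra.
  - destruct k as [|k]; simpl in Hn.
    + split; auto. simpl cntR. unfold ind at 1. destruct Rle_dec; [|lra].
      pose proof (cntR_nonneg al (b :: t)). simpl in H. simpl. lra.
    + destruct Hd as [Hba Hd].
      destruct (IH b k Hal Hd Hn) as [Hb Hc].
      split; [lra|]. change (cntR al (a :: b :: t)) with (ind al a + cntR al (b :: t)).
      unfold ind. destruct Rle_dec; [|lra]. rewrite S_INR. lra.
Qed.

Lemma cntR_app al l1 l2 : cntR al (l1 ++ l2) = cntR al l1 + cntR al l2.
Proof. induction l1; simpl; [ring|]. rewrite IHl1; ring. Qed.

Lemma cntR_map_seq al h m : cntR al (map h (seq 0 m)) = sumR m (fun j => ind al (h j)).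
Proof. induction m; [reflexivity|]. rewrite seq_S, map_app, cntR_app, IHm. simpl. ring. Qed.

Lemma pi_count m g s al : (1 <= s)%nat -> 0 < al -> al <= pi_i m g s ->
  INR s <= sumR m (fun j => ind al (Rabs (g j))).
Proof.
  intros Hs Hal Hp. unfold pi_i, pi_vec in Hp.
  rewrite <- cntR_map_seq, <- cntR_sort.
  pose proof (desc_sort (map (fun j => Rabs (g j)) (seq 0 m))) as Hd.
  destruct (sort_desc (map (fun j => Rabs (g j)) (seq 0 m))) as [|a t].
  - destruct (s - 1)%nat; simpl in Hp; lra.
  - destruct (count_desc al t a (s - 1) Hal Hd Hp) as [_ Hc].
    replace (S (s - 1)) with s in Hc by lia. exact Hc.
Qed.

Lemma lower_bound (phi : R -> ereal) d m alpha s g w :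
  (forall t, 0 <= t <= 1 -> 0 <= eval (phi t)) ->
  (forall t, 0 <= t <= 1 -> 1 - d * (1 - t) <= eval (phi t)) ->
  0 < d -> 0 < alpha -> (forall j, 0 <= g j) -> box m w -> (1 <= s)%nat ->
  alpha <= pi_i m g s ->
  INR s <= sumR m (fun j => eval (phi (w j)) + d / alpha * ((1 - w j) * g j)).
Proof.
  intros Hnn Hlow Hd Ha Hg [_ Hw] Hs Hp.
  eapply Rle_trans; [apply (pi_count m g s alpha Hs Ha Hp)|].
  apply sumR_le. intros j Hj. specialize (Hw j Hj). specialize (Hg j).
  rewrite Rabs_pos_eq by auto. unfold ind. destruct Rle_dec as [Hag|Hag].
  - pose proof (Hlow (w j) Hw).
    assert (d * (1 - w j) <= d / alpha * ((1 - w j) * g j)).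
    { replace (d / alpha * ((1 - w j) * g j)) with ((d * (1 - w j)) * (g j / alpha)) by (field; lra).
      rewrite <- (Rmult_1_r (d * (1 - w j))) at 1. apply Rmult_le_compat_l.
      apply Rmult_le_pos; lra.
      apply (Rmult_le_reg_r alpha); [lra|]. field_simplify; lra. }
    lra.
  - pose proof (Hnn (w j) Hw).
    assert (0 <= d / alpha * ((1 - w j) * g j)).
    { apply Rmult_le_pos. apply Rmult_le_pos; [lra| left; apply Rinv_0_lt_compat; lra].
      apply Rmult_le_pos; lra. }
    lra.
Qed.

Lemma l0_sum m g : sumR m (fun i => if Req_EM_T (g i) 0 then 0 else 1) = INR (l0 m g).
Proof. induction m; simpl; auto. rewrite plus_INR, IHm. destruct Req_EM_T; simpl; lra. Qed.

Theorem theorem3p1 (n m : nat) (phi : R -> ereal) (d : R)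
  (f : (nat -> R) -> ereal) (Om : (nat -> R) -> Prop) (delta : R)
  (p : pexp) (blk : nat -> nat) (sstar : nat) (alpha : R) :
  in_Phi phi -> left_deriv1 phi d ->
  proper_vec n f -> lsc_vec n f -> closed_vec n Om ->
  0 <= delta -> valid_p p -> blk_partition n m blk ->
  let Sset := fun x => vec n x /\ Om x /\ ele (f x) delta in
  (* sstar is the optimal value of min { ||G(x)||_0 : x in S }, attained, nonzero *)
  (exists x, Sset x /\ l0 m (G n blk p x) = sstar) ->
  (forall x, Sset x -> (sstar <= l0 m (G n blk p x))%nat) ->
  sstar <> 0%nat ->
  0 < alpha ->
  (forall x, Sset x -> alpha <= pi_i m (G n blk p x) sstar) ->
  let rhobar := d / alpha in
  let Qfeas := fun x w => Sset x /\ box m w /\ inner m (e_minus w) (G n blk p x) = 0 in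
  let Qobj := fun (x w : nat -> R) => Phisum m phi w in
  let Pfeas := fun x w => Sset x /\ box m w in
  let Pobj := fun rho (x w : nat -> R) =>
                Phisum m phi w + rho * inner m (e_minus w) (G n blk p x) in
  ((forall x w, Sset x -> box m w -> Pobj rhobar x w >= INR sstar) /\
   opt_val Qfeas Qobj (INR sstar)) /\
  (forall rho, rho > rhobar ->
     forall x w, is_gmin Pfeas (Pobj rho) x w <-> is_gmin Qfeas Qobj x w).
Proof.
  intros Hphi Hd _ _ _ _ _ _ Sset Hex _ Hs0 Ha Hpi rhobar Qfeas Qobj Pfeas Pobj.
  subst Sset rhobar Qfeas Qobj Pfeas Pobj. cbv beta.
  destruct Hphi as [_ [_ [_ [Hconv [[ts [Hts [Hts0 Hnn]]] H1]]]]].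
  pose proof (phi_lower phi d Hconv H1 Hd) as Hlow.
  assert (Hdpos : 0 < d).
  { pose proof (Hlow ts ltac:(lra)). rewrite Hts0 in H; simpl in H.
    destruct (Rle_lt_dec d 0); [|auto]. assert (d * (1 - ts) <= 0) by nra. lra. }
  assert (Hinn : forall x w, box m w -> 0 <= inner m (e_minus w) (G n blk p x)).
  { intros x w [_ Hw]. unfold inner, e_minus. rewrite <- (sumR_zero m). apply sumR_le.
    intros i Hi. specialize (Hw i Hi). apply Rmult_le_pos; [lra|apply G_nonneg]. }
  assert (HL : forall x w, (vec n x /\ Om x /\ ele (f x) delta) -> box m w ->
     INR sstar <= Phisum m phi w + d / alpha * inner m (e_minus w) (G n blk p x)).
  { intros x w Sx Bw. unfold Phisum, inner, e_minus.
    eapply Rle_trans.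
    apply (lower_bound phi d m alpha sstar (G n blk p x) w Hnn Hlow Hdpos Ha (G_nonneg n blk p x) Bw
      ltac:(lia) (Hpi x Sx)).
    right. clear. induction m; simpl; [ring|]. rewrite IHm. ring. }
  destruct Hex as [xs [Sxs Hl0]].
  set (g := G n blk p xs).
  set (ws := fun i => if lt_dec i m then (if Req_EM_T (g i) 0 then ts else 1) else 0).
  assert (Bws : box m ws).
  { split. intros i Hi; unfold ws; destruct lt_dec; [lia|auto].
    intros j Hj; unfold ws; destruct lt_dec; [|lia]. destruct Req_EM_T; lra. }
  assert (Iws : inner m (e_minus ws) g = 0).
  { unfold inner, e_minus. rewrite <- (sumR_zero m). apply sumR_ext. intros i Hi.
    unfold ws; destruct lt_dec; [|lia]. destruct Req_EM_T as [e|e]; [rewrite e|]; ring. }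
  assert (Pws : Phisum m phi ws = INR sstar).
  { rewrite <- Hl0, <- l0_sum. unfold Phisum. apply sumR_ext. intros i Hi.
    unfold ws; destruct lt_dec; [|lia]. fold g. destruct Req_EM_T.
    rewrite Hts0; reflexivity. rewrite H1; reflexivity. }
  split; [split|].
  - intros x w Sx Bw. apply Rle_ge. apply HL; auto.
  - split.
    + intros x w [Sx [Bw I0]]. pose proof (HL x w Sx Bw). rewrite I0 in H. lra.
    + intros eps Heps. exists xs, ws. split; [split; [auto|split; auto]|]. rewrite Pws; lra.
  - intros rho Hrho x w. split.
    + intros [[Sx Bw] Hm].
      pose proof (Hm xs ws (conj Sxs Bws)) as Hm1. fold g in Hm1. rewrite Iws, Pws in Hm1.
      pose proof (HL x w Sx Bw). pose proof (Hinn x w Bw).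
      set (I := inner m (e_minus w) (G n blk p x)) in *.
      assert (I0 : I = 0).
      { destruct (Rle_lt_dec I 0); [lra|].
        assert (0 < (rho - d / alpha) * I) by (apply Rmult_lt_0_compat; lra). nra. }
      split; [split; [auto|split; auto]|].
      intros x' w' [Sx' [Bw' I']]. pose proof (HL x' w' Sx' Bw') as HL'. rewrite I' in HL'.
      rewrite I0 in Hm1. lra.
    + intros [[Sx [Bw I0]] Hm]. split; [split; auto|].
      intros x' w' [Sx' Bw']. rewrite I0.
      pose proof (Hm xs ws (conj Sxs (conj Bws Iws))). rewrite Pws in H.
      pose proof (HL x' w' Sx' Bw'). pose proof (Hinn x' w' Bw').
      set (I := inner m (e_minus w') (G n blk p x')) in *.
      assert (d / alpha * I <= rho * I) by (apply Rmult_le_compat_r; lra).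
      lra.
Qed.
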